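(* Let $\boldsymbol{H}\in\mathbb{F}_q^{r\times m}$, $k\in\{2,\dots,r\}$, $i\in L\subseteq[m]$, and regard all entries of $\boldsymbol{H}_{[k]}^{L}$ as fixed except $h_{k,i}$. Assume $L\setminus\{i\}$ is a basis set of $\boldsymbol{H}_{[k-1]}$ and $L$ is a dependent set of $\boldsymbol{H}_{[k-1]}$. Then $|Z_{k,i}^{L}|=1$, and if $h_{k,i}\in\mathbb{F}_q\setminus Z_{k,i}^{L}$, then $L$ is a basis set of $\boldsymbol{H}_{[k]}$.
   Context: $\boldsymbol{H}_{[k]}$ denotes the first $k$ rows and $\boldsymbol{H}_{[k]}^{L}$ its columns in $L$. For a matrix with columns indexed by $[m]$: $S\subseteq[m]$ is independent if its columns are linearly independent, dependent otherwise; a basis set is a maximal independent set (an independent $S$ with $|S|$ equal to the rank of the matrix); a circuit is a dependent set all of whose proper subsets are independent. Veto set: for a circuit $C$ of $\boldsymbol{H}_{[k-1]}$ with $i\in C\subseteq L$, the column of $\boldsymbol{H}_{[k-1]}$ indexed by $i$ equals a unique combination $\sum_{j\in C\setminus\{i\}} f_j\cdot(\text{column }j)$, and its veto value is $c(C)=\sum_{j\in C\setminus\{i\}}f_j h_{k,j}$ (the unique value of $h_{k,i}$ making the columns $C$ of $\boldsymbol{H}_{[k]}$ dependent). $Z_{k,i}^{L}=\{c(L'\cup\{i\}): L'\subseteq L\setminus\{i\},\ L'\cup\{i\}\text{ a circuit of }\boldsymbol{H}_{[k-1]}\}$. *)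

(* Defs.v *)
From HB Require Import structures.
From mathcomp Require Import all_boot all_order all_algebra all_field.
Set Implicit Arguments. Unset Strict Implicit. Unset Printing Implicit Defensive.
Import GRing.Theory.
Local Open Scope ring_scope.

Section Defs.
Variable F : finFieldType.

Definition topRows (r m n : nat) (H : 'M[F]_(r, m)) (hn : (n <= r)%N) : 'M[F]_(n, m) :=
  \matrix_(a < n, j < m) H (widen_ord hn a) j.

Definition independent (n m : nat) (A : 'M[F]_(n, m)) (S : {set 'I_m}) : bool :=
  [forall f : {ffun 'I_m -> F},
     ([forall j, (j \notin S) ==> (f j == 0)] && (\sum_j f j *: col j A == 0))
       ==> [forall j, f j == 0]].

Definition basis_set (n m : nat) (A : 'M[F]_(n, m)) (S : {set 'I_m}) : bool :=
  independent A S && (#|S| == \rank A).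

Definition circuit (n m : nat) (A : 'M[F]_(n, m)) (C : {set 'I_m}) : bool :=
  ~~ independent A C && [forall D : {set 'I_m}, (D \proper C) ==> independent A D].

(* Z^L_{k,i}: A = H_[k-1], h = k-th row of H.  c(C) for the circuit C = L' U {i}
   is sum_{j in C\{i}} f_j h_j where column i of A = sum_{j in C\{i}} f_j col_j. *)
Definition vetoSet (n m : nat) (A : 'M[F]_(n, m)) (h : 'I_m -> F)
    (i : 'I_m) (L : {set 'I_m}) : {set F} :=
  [set c : F | [exists L' : {set 'I_m},
     [&& L' \subset L :\ i, circuit A (i |: L') &
       [exists f : {ffun 'I_m -> F},
          [&& [forall j, (j \notin L') ==> (f j == 0)],
              col i A == \sum_j f j *: col j A &
              c == \sum_j f j * h j]]]]].

End Defs.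

(* Main.v *)
Require Import Defs.
From mathcomp Require Import all_boot all_order all_algebra all_field.
Set Implicit Arguments. Unset Strict Implicit. Unset Printing Implicit Defensive.
Import GRing.Theory.
Local Open Scope ring_scope.

Section H.
Variables (F : finFieldType) (n m : nat) (A : 'M[F]_(n, m)).

Lemma sum_delta (V : nmodType) (i : 'I_m) (G : 'I_m -> V) :
  \sum_j (if j == i then G j else 0) = G i.
Proof. by rewrite -big_mkcond big_pred1_eq. Qed.

Lemma indepP (S : {set 'I_m}) (g : 'I_m -> F) :
  independent A S -> (forall j, j \notin S -> g j = 0) ->
  \sum_j g j *: col j A = 0 -> forall j, g j = 0.
Proof.
move=> /forallP /(_ [ffun j => g j]) /implyP H hs hsum j.
suff /forallP /(_ j) : [forall j, [ffun j0 => g j0] j == 0].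
  by rewrite ffunE => /eqP.
apply: H.
- apply/andP; split; first by apply/forallP => x; apply/implyP => hx; rewrite ffunE hs.
  by under eq_bigr do rewrite ffunE; apply/eqP.
Qed.

Lemma norm_col (g : 'I_m -> F) (i : 'I_m) : g i != 0 -> \sum_j g j *: col j A = 0 ->
  col i A = \sum_j ((if j == i then 1 else 0) - g j / g i) *: col j A.
Proof.
move=> gi hs.
under eq_bigr do rewrite scalerBl.
rewrite sumrB.
have -> : \sum_j (if j == i then 1 else 0) *: col j A = col i A.
  rewrite -(sum_delta i (fun j => col j A)); apply: eq_bigr => j _.
  by case: eqP => _; rewrite ?scale1r ?scale0r.
have -> : \sum_j (g j / g i) *: col j A = (g i)^-1 *: \sum_j g j *: col j A.
  rewrite scaler_sumr; apply: eq_bigr => j _; by rewrite scalerA mulrC.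
by rewrite hs scaler0 subr0.
Qed.

Lemma uniq_rep (S : {set 'I_m}) (f1 f2 : 'I_m -> F) :
  independent A S -> (forall j, j \notin S -> f1 j = 0) -> (forall j, j \notin S -> f2 j = 0) ->
  \sum_j f1 j *: col j A = \sum_j f2 j *: col j A -> forall j, f1 j = f2 j.
Proof.
move=> hI h1 h2 he j; apply/eqP; rewrite -subr_eq0; apply/eqP.
apply: (indepP (g := fun j => f1 j - f2 j) hI) => [x hx|].
  by rewrite h1 // h2 // subr0.
by under eq_bigr do rewrite scalerBl; rewrite sumrB he subrr.
Qed.

Lemma entry_sum (g : 'I_m -> F) (a : 'I_n) (z : 'I_1) :
  (\sum_j g j *: col j A) a z = \sum_j g j * A a j.
Proof. by rewrite summxE; apply: eq_bigr => j _; rewrite !mxE. Qed.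


Lemma norm_supp (L : {set 'I_m}) (g : 'I_m -> F) (i : 'I_m) : g i != 0 -> i \in L ->
  (forall j, j \notin L -> g j = 0) ->
  forall j, j \notin L :\ i -> ((if j == i then 1 else 0) - g j / g i) = 0.
Proof.
move=> gi iL hs j; rewrite in_setD1 negb_and negbK => /orP [/eqP ->|hj].
  by rewrite eqxx divff // subrr.
rewrite hs // mul0r subr0; case: eqP => // ji; by move: hj; rewrite ji iL.
Qed.

End H.

Theorem proposition4 (F : finFieldType) (r m : nat) (H : 'M[F]_(r, m))
    (k : 'I_r) (i : 'I_m) (L : {set 'I_m}) :
  (1 <= k)%N -> i \in L ->
  basis_set (topRows H (ltnW (ltn_ord k))) (L :\ i) ->
  ~~ independent (topRows H (ltnW (ltn_ord k))) L ->
  #|vetoSet (topRows H (ltnW (ltn_ord k))) (fun j => H k j) i L| = 1%N /\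
  (H k i \notin vetoSet (topRows H (ltnW (ltn_ord k))) (fun j => H k j) i L ->
   basis_set (topRows H (ltn_ord k)) L).
Proof.
move=> k1 iL hbas hdep.
set A := topRows H (ltnW (ltn_ord k)).
set B := topRows H (ltn_ord k).
set h := fun j => H k j.
move: hbas => /andP [hind /eqP hcard].
have [g [gsupp gsum gnz]] : exists g : 'I_m -> F, [/\ forall j, j \notin L -> g j = 0,
    \sum_j g j *: col j A = 0 & exists j, g j != 0].
  move: hdep; rewrite /independent negb_forall => /existsP [f].
  rewrite negb_imply => /andP [/andP [/forallP hs /eqP hsum]].
  rewrite negb_forall => /existsP [j hj].
  exists f; split => // [x hx | ]; last by exists j.
  by move/implyP: (hs x) => /(_ hx) /eqP.
have gi : g i != 0.
  apply/negP => /eqP gi0; case: gnz => j; apply/negP; rewrite negbK; apply/eqP.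
  apply: (indepP hind _ gsum) => x; rewrite in_setD1 negb_and negbK => /orP [/eqP -> //| /gsupp //].
pose f := fun j => (if j == i then 1 else 0) - g j / g i.
have fcol : col i A = \sum_j f j *: col j A := norm_col gi gsum.
have fsupp : forall j, j \notin L :\ i -> f j = 0 := norm_supp gi iL gsupp.
have fi : f i = 0 by rewrite /f eqxx divff // subrr.
set c0 := \sum_j f j * h j.
have funiq : forall f' : 'I_m -> F, (forall j, j \notin L :\ i -> f' j = 0) ->
    col i A = \sum_j f' j *: col j A -> forall j, f' j = f j.
  by move=> f' hs he; apply: (uniq_rep hind hs fsupp); rewrite -he.
have SL : [set j | f j != 0] \subset L :\ i.
  by apply/subsetP => j; rewrite inE => hj; apply: contraR hj => hj; rewrite fsupp ?eqxx.
have CL : i |: [set j | f j != 0] \subset L.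
  rewrite subUset sub1set iL /=; apply: subset_trans SL _; exact: subD1set.
have hZ : vetoSet A h i L = [set c0].
  apply/setP => c; rewrite inE in_set1; apply/existsP/eqP.
  - case=> L' /and3P [hL' _ /existsP [f' /and3P [/forallP hs /eqP he /eqP ->]]].
    rewrite /c0; apply: eq_bigr => j _; congr (_ * _); apply: (funiq (fun j => f' j)) => [x hx|//].
    apply/eqP; move/implyP: (hs x); apply; apply: contra hx; exact: (subsetP hL').
  - move=> ->; exists [set j | f j != 0]; apply/and3P; split => //.
    + apply/andP; split.
      * rewrite /independent negb_forall; apply/existsP.
        exists [ffun j => f j - (if j == i then 1 else 0)].
        rewrite negb_imply; apply/andP; split.
        - apply/andP; split.
          + apply/forallP => j; apply/implyP; rewrite !inE negb_or negbK => /andP [/negbTE ji /eqP fj].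
            by rewrite ffunE ji fj subr0.
          + apply/eqP; under eq_bigr do rewrite ffunE scalerBl; rewrite sumrB -fcol.
            have -> : \sum_j (if j == i then 1 else 0) *: col j A = col i A.
              rewrite -(sum_delta i (fun j => col j A)); apply: eq_bigr => j _.
              by case: eqP => _; rewrite ?scale1r ?scale0r.
            by rewrite subrr.
        - rewrite negb_forall; apply/existsP; exists i.
          by rewrite ffunE fi eqxx sub0r oppr_eq0 oner_eq0.
      * apply/forallP => D; apply/implyP => hD.
        apply/forallP => g2; apply/implyP => /andP [/forallP hs2 /eqP hsum2].
        have hs2' : forall x, x \notin D -> g2 x = 0.
          by move=> x hx; apply/eqP; move/implyP: (hs2 x); apply.
        have [DC [x xC xD]] := properP hD.
        case: (eqVneq (g2 i) 0) => g2i.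
        - apply/forallP => j; apply/eqP.
          apply: (indepP hind _ hsum2) => y; rewrite in_setD1 negb_and negbK => /orP [/eqP -> //|hy].
          apply: hs2'; apply: contra hy => yD; exact: (subsetP CL y (subsetP DC y yD)).
        - exfalso.
          have g2L : forall j, j \notin L -> g2 j = 0.
            move=> y hy; apply: hs2'; apply: contra hy => yD; exact: (subsetP CL y (subsetP DC y yD)).
          have e := funiq _ (norm_supp g2i iL g2L) (norm_col g2i hsum2) x.
          have xni : x != i by apply: contraNneq g2i => <-; rewrite hs2'.
          have fx0 : f x = 0 by rewrite -e (hs2' x xD) mul0r subr0 (negbTE xni).
          by move: xC; rewrite !inE (negbTE xni) /= fx0 eqxx.
    + apply/existsP; exists [ffun j => f j]; apply/and3P; split.
      * by apply/forallP => j; apply/implyP; rewrite inE negbK ffunE.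
      * by apply/eqP; rewrite {1}fcol; apply: eq_bigr => j _; rewrite ffunE.
      * by apply/eqP; apply: eq_bigr => j _; rewrite ffunE.
split; first by rewrite hZ cards1.
move=> hnot.
have hc : H k i != c0 by apply: contra hnot => /eqP ->; rewrite hZ set11.
apply/andP; split.
  apply/forallP => g2; apply/implyP => /andP [/forallP hs2 /eqP hsum2].
  have hs2' : forall x, x \notin L -> g2 x = 0.
    by move=> x hx; apply/eqP; move/implyP: (hs2 x); apply.
  have hsumA : \sum_j g2 j *: col j A = 0.
    apply/matrixP => a z; rewrite entry_sum mxE.
    have := congr1 (fun M : 'M[F]_(k.+1, 1) => M (widen_ord (leqnSn k) a) z) hsum2; rewrite /= entry_sum mxE => E; apply: (etrans _ E).
    apply: eq_bigr => x _; rewrite !mxE; congr (_ * H _ _); exact: val_inj.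
  have hrow : \sum_j g2 j * h j = 0.
    have := congr1 (fun M : 'M[F]_(k.+1, 1) => M ord_max ord0) hsum2; rewrite /= entry_sum mxE => E; apply: (etrans _ E).
    apply: eq_bigr => x _; rewrite !mxE /h; congr (_ * H _ _); exact: val_inj.
  case: (eqVneq (g2 i) 0) => g2i.
    apply/forallP => j; apply/eqP.
    apply: (indepP hind _ hsumA) => x; rewrite in_setD1 negb_and negbK => /orP [/eqP -> //| /hs2' //].
  exfalso; have e := funiq _ (norm_supp g2i iL hs2') (norm_col g2i hsumA).
  move: hc; rewrite /c0.
  under eq_bigr do rewrite -e mulrBl.
  rewrite sumrB.
  have -> : \sum_j (if j == i then 1 else 0) * h j = h i.
    rewrite -(sum_delta i h); apply: eq_bigr => j _.
    by case: eqP => _; rewrite ?mul1r ?mul0r.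
  have -> : \sum_j (g2 j / g2 i) * h j = (g2 i)^-1 * \sum_j g2 j * h j.
    rewrite mulr_sumr; apply: eq_bigr => j _; by rewrite mulrAC mulrC.
  by rewrite hrow mulr0 subr0 eqxx.
rewrite (cardsD1 i L) iL hcard.
have AB : (A <= B)%MS.
  apply/row_subP => a.
  have -> : row a A = row (widen_ord (leqnSn k) a) B.
    by apply/rowP => j; rewrite !mxE; congr (H _ _); exact: val_inj.
  exact: row_sub.
have hB : row ord_max B = \row_j h j.
  by apply/rowP => j; rewrite !mxE; congr (H _ _); exact: val_inj.
have nBA : ~~ (B <= A)%MS.
  apply/negP => hBA.
  have : (row ord_max B <= A)%MS := submx_trans (row_sub _ _) hBA.
  case/submxP => D hD; apply: (negP hc); apply/eqP/esym.
  have hj : forall j, h j = \sum_a D ord0 a * A a j.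
    by move=> j; have := congr1 (fun M : 'M[F]_(1, m) => M ord0 j) hD; rewrite /= hB !mxE.
  have hA : forall a, A a i = \sum_j f j * A a j.
    by move=> a; have := congr1 (fun M : 'M[F]_(k, 1) => M a ord0) fcol; rewrite entry_sum mxE.
  rewrite /c0; under eq_bigr do rewrite hj mulr_sumr.
  rewrite exchange_big /=; have -> : H k i = \sum_a D ord0 a * A a i := hj i.
  apply: eq_bigr => a _.
  rewrite hA mulr_sumr; apply: eq_bigr => j _; by rewrite mulrCA.
have lt : (\rank A < \rank B)%N by apply: rank_ltmx; rewrite ltmxE AB nBA.
have le : (\rank B <= \rank A + 1)%N.
  have BS : (B <= A + row ord_max B)%MS.
    apply/row_subP => a; case: (ltnP a k) => ha.
      have -> : row a B = row (Ordinal ha) A.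
        by apply/rowP => j; rewrite !mxE; congr (H _ _); exact: val_inj.
      exact: submx_trans (row_sub _ _) (addsmxSl _ _).
    have -> : a = ord_max.
      by apply/val_inj => /=; apply/eqP; rewrite eqn_leq ha andbT -ltnS ltn_ord.
    exact: addsmxSr.
  apply: leq_trans (mxrankS BS) _; apply: leq_trans (mxrank_adds_leqif _ _) _.
  by rewrite leq_add2l rank_leq_row.
by move: le; rewrite addn1 => le; rewrite eqn_leq add1n lt le.
Qed.
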